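(* Let $n\geq 2$ and let $(A,\cdot,[\cdot,\ldots,\cdot])$ be a simple transposed Poisson $n$-Lie algebra. Then the $n$-Lie algebra $(A,[\cdot,\ldots,\cdot])$ is simple.
   Context: An $n$-Lie algebra is a vector space $L$ with an $n$-linear skew-symmetric bracket satisfying $[[x_1,\ldots,x_n],y_2,\ldots,y_n]=\sum_{i=1}^n[x_1,\ldots,x_{i-1},[x_i,y_2,\ldots,y_n],x_{i+1},\ldots,x_n]$; an ideal is a subspace $I$ with $[I,A,\ldots,A]\subseteq I$, and it is simple if $[A,\ldots,A]\neq 0$ and its only ideals are $0$ and $A$. A transposed Poisson $n$-Lie algebra (over $\mathbb{C}$) is a triple $(A,\cdot,[\cdot,\ldots,\cdot])$ where $(A,\cdot)$ is commutative associative, $(A,[\cdot,\ldots,\cdot])$ is an $n$-Lie algebra, and $n\,h\,[a_1,\ldots,a_n]=\sum_{i=1}^n[a_1,\ldots,h a_i,\ldots,a_n]$ for all $h,a_i\in A$. An ideal of it is a subspace $J$ with $A\cdot J\subseteq J$ and $[J,A,\ldots,A]\subseteq J$; it is simple if $[A,\ldots,A]\neq 0$ and its only ideals are $0$ and $A$. *)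

(* Defs.v *)
From HB Require Import structures.
From mathcomp Require Import all_boot all_order all_algebra.
From mathcomp Require Import complex.
From mathcomp Require Import Rstruct.
From Stdlib Require Import Reals.
Set Implicit Arguments. Unset Strict Implicit. Unset Printing Implicit Defensive.
Import GRing.Theory.
Local Open Scope ring_scope.

Definition CC : fieldType := complex R.

Section NLie.
Variables (K : fieldType) (A : lmodType K) (n : nat).

Definition upd (a : 'I_n -> A) (i : 'I_n) (v : A) : 'I_n -> A :=
  fun j => if j == i then v else a j.

Definition swap (a : 'I_n -> A) (i k : 'I_n) : 'I_n -> A :=
  fun j => if j == i then a k else if j == k then a i else a j.

Definition multilinear (br : ('I_n -> A) -> A) : Prop :=
  forall (a : 'I_n -> A) (i : 'I_n) (c : K) (x y : A),
    br (upd a i (c *: x + y)) = c *: br (upd a i x) + br (upd a i y).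

Definition skew_symmetric (br : ('I_n -> A) -> A) : Prop :=
  forall (a : 'I_n -> A) (i k : 'I_n), i != k -> br (swap a i k) = - br a.

(* Filippov identity:
   [[x_1..x_n], y_2..y_n] = sum_i [x_1,..,[x_i,y_2..y_n],..,x_n];
   the y's are the entries of y : 'I_n -> A other than the first slot k0. *)
Definition filippov (br : ('I_n -> A) -> A) : Prop :=
  forall (x y : 'I_n -> A) (k0 : 'I_n), nat_of_ord k0 = 0%N ->
    br (upd y k0 (br x)) =
    \sum_(i < n) br (upd x i (br (upd y k0 (x i)))).

Definition is_nLie (br : ('I_n -> A) -> A) : Prop :=
  [/\ multilinear br, skew_symmetric br & filippov br].

Definition subspace (I : A -> Prop) : Prop :=
  [/\ I 0, (forall x y, I x -> I y -> I (x + y)) & (forall (c : K) x, I x -> I (c *: x))].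

Definition bracket_closed (br : ('I_n -> A) -> A) (I : A -> Prop) : Prop :=
  forall (a : 'I_n -> A) (k0 : 'I_n), nat_of_ord k0 = 0%N -> I (a k0) -> I (br a).

Definition nLie_ideal (br : ('I_n -> A) -> A) (I : A -> Prop) : Prop :=
  subspace I /\ bracket_closed br I.

Definition nontrivial_bracket (br : ('I_n -> A) -> A) : Prop :=
  exists a : 'I_n -> A, br a != 0.

Definition only_trivial_ideals (P : (A -> Prop) -> Prop) : Prop :=
  forall I, P I -> (forall x, I x -> x = 0) \/ (forall x, I x).

Definition simple_nLie (br : ('I_n -> A) -> A) : Prop :=
  is_nLie br /\ nontrivial_bracket br /\ only_trivial_ideals (nLie_ideal br).

Definition comm_assoc_product (mul : A -> A -> A) : Prop :=
  [/\ (forall (c : K) x y z, mul (c *: x + y) z = c *: mul x z + mul y z),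
      (forall x y, mul x y = mul y x) &
      (forall x y z, mul (mul x y) z = mul x (mul y z))].

Definition transposed_compat (mul : A -> A -> A) (br : ('I_n -> A) -> A) : Prop :=
  forall (h : A) (a : 'I_n -> A),
    n%:R *: mul h (br a) = \sum_(i < n) br (upd a i (mul h (a i))).

Definition is_TPnLie (mul : A -> A -> A) (br : ('I_n -> A) -> A) : Prop :=
  [/\ comm_assoc_product mul, is_nLie br & transposed_compat mul br].

Definition TP_ideal (mul : A -> A -> A) (br : ('I_n -> A) -> A) (J : A -> Prop) : Prop :=
  [/\ subspace J, (forall h x, J x -> J (mul h x)) & bracket_closed br J].

Definition simple_TPnLie (mul : A -> A -> A) (br : ('I_n -> A) -> A) : Prop :=
  is_TPnLie mul br /\ nontrivial_bracket br /\ only_trivial_ideals (TP_ideal mul br).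

End NLie.

(* Main.v *)
Require Import Defs.
From mathcomp Require Import all_boot all_order all_algebra.
From mathcomp Require Import complex Rstruct.
From Stdlib Require Import FunctionalExtensionality.
Set Implicit Arguments. Unset Strict Implicit. Unset Printing Implicit Defensive.
Import GRing.Theory Num.Theory.
Local Open Scope ring_scope.

Section Upd.
Variables (K : fieldType) (A : lmodType K) (n : nat).

Lemma upd_same (a : 'I_n -> A) i v : upd a i v i = v.
Proof. by rewrite /upd eqxx. Qed.

Lemma upd_other (a : 'I_n -> A) i j v : j != i -> upd a i v j = a j.
Proof. by rewrite /upd => /negbTE ->. Qed.

Lemma upd_upd (a : 'I_n -> A) i u v : upd (upd a i u) i v = upd a i v.
Proof. apply: functional_extensionality => j; rewrite /upd; by case: (j == i). Qed.

Lemma upd_id (a : 'I_n -> A) i : upd a i (a i) = a.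
Proof. apply: functional_extensionality => j; rewrite /upd; by case: eqP => [->|]. Qed.

Lemma upd_comm (a : 'I_n -> A) i j u v : i != j ->
  upd (upd a i u) j v = upd (upd a j v) i u.
Proof.
move=> hij; apply: functional_extensionality => k; rewrite /upd.
case: (eqVneq k j) => [->|hkj].
  by rewrite eq_sym (negbTE hij).
by case: (eqVneq k i).
Qed.

Lemma swap_upd (b : 'I_n -> A) k0 i v : i != k0 ->
  swap (upd b i v) k0 i = upd (swap b k0 i) k0 v.
Proof.
move=> hik; apply: functional_extensionality => j; rewrite /swap /upd.
by repeat (case: eqP => //= ?; subst); rewrite ?eqxx in hik.
Qed.

Lemma upd_swap_k0 (b : 'I_n -> A) k0 i : upd (swap b k0 i) k0 (b i) = swap b k0 i.
Proof.
apply: functional_extensionality => j; rewrite /swap /upd.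
by repeat (case: eqP => //= ?; subst).
Qed.

Lemma swap_k0 (b : 'I_n -> A) k0 i : swap b k0 i k0 = b i.
Proof. by rewrite /swap eqxx. Qed.
End Upd.

Section Core.
Variables (K : fieldType) (A : lmodType K) (n : nat).
Variables (mul : A -> A -> A) (br : ('I_n -> A) -> A).
Hypotheses (Hml : multilinear br) (Hsk : skew_symmetric br) (Hfil : filippov br).
Hypotheses (Hmul : comm_assoc_product mul) (Hcomp : transposed_compat mul br).

Lemma br_upd0 a i : br (upd a i 0) = 0.
Proof.
have := Hml a i 1 0 0; rewrite !scale1r addr0 => h.
by rewrite -[LHS]addr0 in h; move/addrI: h => <-.
Qed.

Lemma br_updD a i x y : br (upd a i (x + y)) = br (upd a i x) + br (upd a i y).
Proof. by have := Hml a i 1 x y; rewrite !scale1r. Qed.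

Lemma br_updZ a i c x : br (upd a i (c *: x)) = c *: br (upd a i x).
Proof. by have := Hml a i c x 0; rewrite !addr0 br_upd0 addr0. Qed.

Lemma br_updN a i x : br (upd a i (- x)) = - br (upd a i x).
Proof. by rewrite -scaleN1r br_updZ scaleN1r. Qed.

Lemma br_updB a i x y : br (upd a i (x - y)) = br (upd a i x) - br (upd a i y).
Proof. by rewrite br_updD br_updN. Qed.

Lemma br_upd_sum a i (J : Type) (r : seq J) (P : pred J) (F : J -> A) :
  br (upd a i (\sum_(j <- r | P j) F j)) = \sum_(j <- r | P j) br (upd a i (F j)).
Proof.
exact: (big_morph (fun v => br (upd a i v)) (br_updD a i) (br_upd0 a i)).
Qed.

Lemma mul0l z : mul 0 z = 0.
Proof.
case: Hmul => hl _ _; have := hl 1 0 0 z; rewrite !scale1r addr0 => h.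
by rewrite -[LHS]addr0 in h; move/addrI: h => <-.
Qed.

Lemma mulC' x y : mul x y = mul y x.
Proof. by case: Hmul. Qed.

Lemma mulA' x y z : mul (mul x y) z = mul x (mul y z).
Proof. by case: Hmul. Qed.

Lemma mulDr' x u v : mul x (u + v) = mul x u + mul x v.
Proof. by case: Hmul => hl _ _; rewrite !(mulC' x); have := hl 1 u v x; rewrite !scale1r. Qed.

Lemma mulZr' x c u : mul x (c *: u) = c *: mul x u.
Proof.
case: Hmul => hl _ _; rewrite !(mulC' x); have := hl c u 0 x.
by rewrite !addr0 mul0l addr0.
Qed.

Lemma mul0r' x : mul x 0 = 0.
Proof. by rewrite mulC' mul0l. Qed.

Lemma mulNr' x u : mul x (- u) = - mul x u.
Proof. by rewrite -scaleN1r mulZr' scaleN1r. Qed.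

Lemma mulBr' x u v : mul x (u - v) = mul x u - mul x v.
Proof. by rewrite mulDr' mulNr'. Qed.

Lemma mul_sumr' x (J : Type) (r : seq J) (P : pred J) (F : J -> A) :
  mul x (\sum_(j <- r | P j) F j) = \sum_(j <- r | P j) mul x (F j).
Proof. exact: (big_morph (mul x) (mulDr' x) (mul0r' x)). Qed.


Variable k0 : 'I_n.
Hypothesis Hk0 : nat_of_ord k0 = 0%N.
Variable I : A -> Prop.
Hypothesis HI : nLie_ideal br I.

Local Notation nn := (n%:R : K).

Definition ad (y : 'I_n -> A) (z : A) := br (upd y k0 z).

Lemma I0 : I 0. Proof. by case: HI => -[]. Qed.
Lemma ID x y : I x -> I y -> I (x + y). Proof. by case: HI => -[_ h _] _; apply: h. Qed.
Lemma IZ c x : I x -> I (c *: x). Proof. by case: HI => -[_ _ h] _; apply: h. Qed.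
Lemma IN x : I x -> I (- x). Proof. by move=> h; rewrite -scaleN1r; apply: IZ. Qed.
Lemma IB x y : I x -> I y -> I (x - y). Proof. by move=> hx hy; apply: ID => //; apply: IN. Qed.
Lemma Isum (J : Type) (r : seq J) (P : pred J) (F : J -> A) :
  (forall j, P j -> I (F j)) -> I (\sum_(j <- r | P j) F j).
Proof. by move=> h; apply: (big_ind I I0 ID). Qed.

Lemma I_k0 a : I (a k0) -> I (br a).
Proof. by case: HI => _ hb; apply: hb. Qed.

Lemma I_any a i : I (a i) -> I (br a).
Proof.
case: (eqVneq i k0) => [->|hik]; first exact: I_k0.
move=> hai; have hs := Hsk a (i := k0) (k := i).
rewrite -[br a]opprK -hs; last by rewrite eq_sym.
by apply: IN; apply: I_k0; rewrite swap_k0.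
Qed.

Lemma I_slot a i u v : I (u - v) -> I (br (upd a i u) - br (upd a i v)).
Proof. by move=> h; rewrite -br_updB; apply: (I_any (i := i)); rewrite upd_same. Qed.

Lemma E1 x y h : I x -> I (nn *: mul h (ad y x) - ad y (mul h x)).
Proof.
move=> hx; rewrite /ad Hcomp (bigD1 k0) //= upd_same upd_upd.
rewrite addrAC subrr add0r; apply: Isum => i hi.
by apply: I_k0; rewrite upd_other 1?eq_sym // upd_same.
Qed.

Definition F x y z := nn *: mul x (ad y z) - ad y (mul x z).

Lemma Fexp x y z :
  F x y z = \sum_(k | k != k0) ad (upd y k (mul x (y k))) z.
Proof.
rewrite /F /ad Hcomp (bigD1 k0) //= upd_same upd_upd addrAC subrr add0r.
apply: eq_bigr => k hk; rewrite upd_other // upd_comm //; by rewrite eq_sym.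
Qed.

Lemma F_deriv x y b : F x y (br b) = \sum_i br (upd b i (F x y (b i))).
Proof.
rewrite Fexp.
under eq_bigr => k _ do rewrite /ad (Hfil _ _ Hk0).
rewrite exchange_big /=; apply: eq_bigr => i _.
by rewrite Fexp br_upd_sum.
Qed.

Lemma ad_upd_sum y (J : Type) (r : seq J) (P : pred J) (G : J -> A) :
  ad y (\sum_(j <- r | P j) G j) = \sum_(j <- r | P j) ad y (G j).
Proof. exact: br_upd_sum. Qed.

Lemma F_br x y b : I x -> (n%:R - 1 : K) != 0 -> I (F x y (br b)).
Proof.
move=> hx hn1.
set P := \sum_i br (upd b i (ad y (mul x (b i)))).
set G := fun i j => br (upd (upd b i (mul x (b i))) j (ad y (b j))).
set C := \sum_i \sum_(j | j != i) G i j.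
set Q := \sum_i br (upd b i (mul x (ad y (b i)))).
have eq_i : nn *: ad y (mul x (br b)) = P + C.
  rewrite /ad -br_updZ Hcomp br_upd_sum /P /C -big_split /=.
  apply: eq_bigr => i _; rewrite (Hfil _ _ Hk0) (bigD1 i) //= upd_same upd_upd.
  by congr (_ + _); apply: eq_bigr => j hj; rewrite upd_other.
have eq_ii : nn *: (nn *: mul x (ad y (br b))) = nn *: Q + nn *: C.
  rewrite -scalerDr; congr (_ *: _).
  rewrite {1}/ad (Hfil _ _ Hk0) mul_sumr' scaler_sumr.
  transitivity (\sum_j (br (upd b j (mul x (ad y (b j)))) + \sum_(i | i != j) G i j)).
    apply: eq_bigr => j _; rewrite Hcomp (bigD1 j) //= upd_same upd_upd.
    congr (_ + _); apply: eq_bigr => i hi; rewrite upd_other // /G upd_comm //.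
    by rewrite eq_sym.
  rewrite big_split /=; congr (_ + _).
  rewrite /C (exchange_big_dep xpredT) //=.
  by apply: eq_bigr => i _; apply: eq_bigl => j; rewrite eq_sym.
have hw : I (ad y x) by apply: I_k0; rewrite upd_same.
have ha : I (nn *: (nn *: mul (ad y x) (br b)) - P).
  rewrite Hcomp scaler_sumr /P -sumrB; apply: Isum => i _.
  rewrite -br_updZ; apply: I_slot.
  by rewrite mulC' (mulC' x); apply: E1.
have hb : I (nn *: (nn *: mul (ad y x) (br b)) - nn *: ad y (mul x (br b))).
  by rewrite -scalerBr; apply: IZ; rewrite mulC' (mulC' x); apply: E1.
have hC : I C.
  have -> : C = (nn *: (nn *: mul (ad y x) (br b)) - P)
               - (nn *: (nn *: mul (ad y x) (br b)) - nn *: ad y (mul x (br b))).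
    by rewrite eq_i opprB addrC addrA subrK addrC addKr.
  exact: IB.
have hQ : \sum_i br (upd b i (F x y (b i))) = nn *: Q - P.
  rewrite /F /Q /P scaler_sumr -sumrB; apply: eq_bigr => i _.
  by rewrite br_updB br_updZ.
have h1 : I ((nn - 1) *: F x y (br b)).
  rewrite scalerBl scale1r {2}F_deriv hQ {1}/F scalerBr eq_ii eq_i.
  have -> : nn *: Q + nn *: C - (P + C) - (nn *: Q - P) = (nn - 1) *: C.
    by rewrite opprB opprD scalerBl scale1r addrC !addrA subrK (addrC P) addrK.
  exact: IZ.
have := IZ (nn - 1)^-1 h1.
by rewrite scalerA mulVf // scale1r.
Qed.

Hypothesis Hperf : forall S : A -> Prop, subspace S -> (forall a, S (br a)) -> forall z, S z.

Lemma F_all x y z : I x -> (n%:R - 1 : K) != 0 -> I (F x y z).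
Proof.
move=> hx hn1; apply: (Hperf (S := fun z => I (F x y z))); last first.
  by move=> a; apply: F_br.
split.
- by rewrite /F /ad br_upd0 mul0r' scaler0 br_upd0 subrr; apply: I0.
- move=> u v hu hv; have -> : F x y (u + v) = F x y u + F x y v.
    by rewrite /F /ad !(br_updD, mulDr') scalerDr opprD addrACA.
  exact: ID.
- move=> c u hu; have -> : F x y (c *: u) = c *: F x y u.
    by rewrite /F /ad !(br_updZ, mulZr') scalerA mulrC -scalerA -scalerBr.
  exact: IZ.
Qed.

Lemma mul_br x b : I x -> (n%:R : K) != 0 -> (n%:R - 1 : K) != 0 -> I (mul x (br b)).
Proof.
move=> hx hn hn1.
have each : forall i, I (br (upd b i (mul x (b i))) - nn *: mul x (br b)).
  move=> i; case: (eqVneq i k0) => [->|hik].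
    have -> : br b = ad b (b k0) by rewrite /ad upd_id.
    have -> : br (upd b k0 (mul x (b k0))) = ad b (mul x (b k0)) by [].
    by rewrite -opprB; apply: IN; apply: F_all.
  have hki : k0 != i by rewrite eq_sym.
  have -> : br (upd b i (mul x (b i))) = - ad (swap b k0 i) (mul x (b i)).
    by rewrite /ad -swap_upd // (Hsk _ hki) opprK.
  have -> : br b = - ad (swap b k0 i) (b i).
    by rewrite /ad upd_swap_k0 (Hsk _ hki) opprK.
  by rewrite mulNr' scalerN opprK addrC; apply: F_all.
have hs : I (\sum_i (br (upd b i (mul x (b i))) - nn *: mul x (br b))).
  by apply: Isum => i _; apply: each.
rewrite sumrB -Hcomp sumr_const card_ord -scaler_nat scalerA -scalerBl in hs.
have := IZ (nn - nn * nn)^-1 hs.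
rewrite scalerA mulVf ?scale1r //.
rewrite -{1}[nn]mulr1 -mulrBr mulf_neq0 //.
by rewrite -opprB oppr_eq0.
Qed.

Lemma mul_all x z : I x -> (n%:R : K) != 0 -> (n%:R - 1 : K) != 0 -> I (mul z x).
Proof.
move=> hx hn hn1; rewrite mulC'.
apply: (Hperf (S := fun z => I (mul x z))); last by move=> a; apply: mul_br.
split.
- by rewrite mul0r'; apply: I0.
- by move=> u v hu hv; rewrite mulDr'; apply: ID.
- by move=> c u hu; rewrite mulZr'; apply: IZ.
Qed.

End Core.

Lemma natr_CC_neq0 (m : nat) : m != 0%nat -> ((m%:R : CC) != 0).
Proof.
move=> hm.
have H : ((m%:R : complex Rdefinitions.R) != 0) by rewrite pnatr_eq0.
exact H.
Qed.

Theorem mainTheorem6 (n : nat) (hn : (2 <= n)%N) (A : lmodType CC)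
  (mul : A -> A -> A) (br : ('I_n -> A) -> A) :
  simple_TPnLie mul br -> simple_nLie br.
Proof.
move=> [HTP [Hnt Hsimp]]; case: HTP => Hmul HnLie Hcomp.
case: (HnLie) => Hml Hsk Hfil.
have hn0 : (n%:R : CC) != 0 by apply: natr_CC_neq0; rewrite -lt0n; apply: ltnW.
have hn1 : (n%:R - 1 : CC) != 0.
  have -> : (n%:R - 1 : CC) = (n.-1)%:R.
    by rewrite -{1}(prednK (ltnW hn)) -addn1 natrD addrK.
  by apply: natr_CC_neq0; rewrite -lt0n -ltnS prednK // ltnW.
have n0 : (0 < n)%N by apply: ltnW.
pose k0 : 'I_n := Ordinal n0.
have Hk0 : nat_of_ord k0 = 0%N by [].
pose D := fun z => forall S : A -> Prop, subspace S -> (forall a, S (br a)) -> S z.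
have Dsub : subspace D.
  split.
  - by move=> S [h0 _ _] _.
  - by move=> x y hx hy S hS hb; case: (hS) => _ hD _; apply: hD; [apply: hx | apply: hy].
  - by move=> c x hx S hS hb; case: (hS) => _ _ hZ; apply: hZ; apply: hx.
have DTP : TP_ideal mul br D.
  split => //.
  - move=> h x hx S hS hb.
    case: (hS) => h0 hD hZ.
    apply: (hx (fun z => S (mul h z))).
    + split.
      * by rewrite (mul0r' Hmul).
      * by move=> u v hu hv; rewrite (mulDr' Hmul); apply: hD.
      * by move=> c u hu; rewrite (mulZr' Hmul); apply: hZ.
    + move=> a.
      have -> : mul h (br a) = (n%:R)^-1 *: \sum_i br (upd a i (mul h (a i))).
        by rewrite -Hcomp scalerA mulVf // scale1r.
      apply: hZ; apply: (big_ind S h0 hD) => i _; exact: hb.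
  - by move=> a k hk _ S hS hb; apply: hb.
have Dall : forall z, D z.
  case: (Hsimp D DTP) => // h0.
  case: Hnt => a ha; exfalso.
  by move: ha; rewrite (h0 (br a)) ?eqxx // => S _ hb; apply: hb.
have Hperf : forall S : A -> Prop, subspace S -> (forall a, S (br a)) -> forall z, S z.
  by move=> S hS hb z; apply: Dall.
split => //; split => //.
move=> I HI; apply: Hsimp.
split; first by case: HI.
- by move=> h x hx; apply: (mul_all Hml Hsk Hfil Hmul Hcomp Hk0 HI Hperf).
- by case: HI.
Qed.
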